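(* Suppose the neighbor graph $\mathbb N$ (no self-arcs, $m\ge2$ vertices) is strongly connected and let $\mathrm D$ be an ear decomposition of $\mathbb N$. If $\max_{\mathbb E\in\mathrm D} l(\mathbb E)\le n$, where $l(\mathbb E)$ is the number of arcs of the ear $\mathbb E$, then there exist matrices $C_{ji}$ (one per arc $(j,i)$ of $\mathbb N$, each with $n$ columns) with $\ker C_{ji}\ne0$ for every arc such that $\bar{\mathbb N}$ is well-configured.
   Context: Setup: $m$ agents labeled $1,\dots,m$ with states $x_i\in\mathbb R^n$; neighbor graph $\mathbb N$ is a directed graph on $\{1,\dots,m\}$ without self-arcs; each arc $(j,i)$ carries a real matrix $C_{ji}$ with $n$ columns; $\bar{\mathbb N}$ denotes $\mathbb N$ with these matrices. $\bar{\mathbb N}$ is well-configured if for all $x_1,\dots,x_m\in\mathbb R^n$, $C_{ji}x_i=C_{ji}x_j$ for every arc $(j,i)$ implies $x_1=\cdots=x_m$. A directed path is a subgraph with distinct vertices $v_0,\dots,v_k$ ($k\ge1$) and arcs $(v_{r-1},v_r)$; its end-vertices are $v_0,v_k$. A directed cycle is a subgraph with distinct vertices $v_1,\dots,v_k$ ($k\ge 2$) and arcs $(v_r,v_{r+1})$, $r<k$, and $(v_k,v_1)$. An ear decomposition of a directed graph $\mathbb G$ is a sequence of subgraphs $\mathbb E_0,\dots,\mathbb E_p$ such that $\mathbb E_0$ is a directed cycle, each $\mathbb E_i$ ($i\ge1$) is a directed path or directed cycle, the $\mathbb E_i$ are pairwise arc-disjoint with union $\mathbb G$, and for $i\ge1$: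 a cycle $\mathbb E_i$ has exactly one vertex in common with $\bigcup_{k<i}\mathbb E_k$, and a path $\mathbb E_i$ has its two end-vertices as the only vertices in common with $\bigcup_{k<i}\mathbb E_k$. The $\mathbb E_i$ are called ears. *)

(* Defs.v *)
From HB Require Import structures.
From mathcomp Require Import all_boot all_order all_algebra.
From mathcomp Require Import reals.
Set Implicit Arguments. Unset Strict Implicit. Unset Printing Implicit Defensive.
Import Order.TTheory GRing.Theory Num.Theory.
Local Open Scope ring_scope.

(* A neighbor graph on vertices 'I_m is a relation N : rel 'I_m;
   N j i means there is an arc (j,i) from j to i. *)

(* An ear is either a directed path [v0; ...; vk] (ear_cyc = false), with arcs
   (v_{r-1}, v_r), or a directed cycle [v1; ...; vk] (ear_cyc = true), with arcs
   (v_r, v_{r+1}) and (v_k, v_1). *)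
Record ear (m : nat) := Ear { ear_cyc : bool; ear_vs : seq 'I_m }.

Definition ear_arcs m (E : ear m) : seq ('I_m * 'I_m) :=
  if ear_cyc E then zip (ear_vs E) (rot 1 (ear_vs E))
  else zip (ear_vs E) (behead (ear_vs E)).

Definition ear_len m (E : ear m) : nat := size (ear_arcs E).

Definition ear_ok m (E : ear m) : bool := uniq (ear_vs E) && (1 < size (ear_vs E))%N.

Definition ear0 m : ear m := Ear false [::].

Definition prev_vs m (D : seq (ear m)) (k : nat) : seq 'I_m :=
  flatten (map (@ear_vs m) (take k D)).

Definition ear_decomposition m (N : rel 'I_m) (D : seq (ear m)) : Prop :=
  [/\
      (0 < size D)%N /\ ear_cyc (nth (ear0 m) D 0),
      all (@ear_ok m) D,
      (forall k l, (k < l)%N -> (l < size D)%N ->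
         forall a, a \in ear_arcs (nth (ear0 m) D k) ->
                   a \notin ear_arcs (nth (ear0 m) D l)),
      (forall v : 'I_m, exists2 k, (k < size D)%N & v \in ear_vs (nth (ear0 m) D k))
      /\ (forall j i : 'I_m, N j i <->
            exists2 k, (k < size D)%N & (j, i) \in ear_arcs (nth (ear0 m) D k)) &
      (forall k, (0 < k)%N -> (k < size D)%N ->
         let E := nth (ear0 m) D k in
         if ear_cyc E then
           exists v : 'I_m, forall u : 'I_m,
             (u \in ear_vs E /\ u \in prev_vs D k) <-> u = v
         else
           forall u : 'I_m,
             (u \in ear_vs E /\ u \in prev_vs D k) <->
             (u = head u (ear_vs E) \/ u = last u (ear_vs E)))].

Definition well_configured (R : pzRingType) m n (N : rel 'I_m)
  (r : 'I_m -> 'I_m -> nat) (C : forall j i : 'I_m, 'M[R]_(r j i, n)) : Prop :=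
  forall x : 'I_m -> 'cV[R]_n,
    (forall j i, N j i -> C j i *m x i = C j i *m x j) ->
    forall i j, x i = x j.

(* Main.v *)
Require Import Defs.
From HB Require Import structures.
From mathcomp Require Import all_boot all_order all_algebra.
From mathcomp Require Import reals.
From mathcomp Require Import zify.
Set Implicit Arguments. Unset Strict Implicit. Unset Printing Implicit Defensive.
Import Order.TTheory GRing.Theory Num.Theory.

Lemma chain_eq (T U : Type) (f : T -> U) x0 (w : seq T) a b :
  (a <= b)%N -> (forall r, (a <= r)%N -> (r < b)%N -> f (nth x0 w r) = f (nth x0 w r.+1)) ->
  f (nth x0 w a) = f (nth x0 w b).
Proof.
elim: b => [|b IH]; first by rewrite leqn0 => /eqP ->.
rewrite leq_eqVlt => /orP [/eqP -> //|]; rewrite ltnS => hab H.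
rewrite IH //; last by move=> r h1 h2; apply: H => //; apply: ltnW.
by apply: H.
Qed.

Lemma ear_lemma m (U : Type) (f : 'I_m -> U) (k : nat) (cyc : bool) (s : seq 'I_m) x0 :
  (1 < size s)%N ->
  (forall r, (r < size (ear_arcs (Ear cyc s)))%N -> r != k ->
     f (nth (x0, x0) (ear_arcs (Ear cyc s)) r).1 = f (nth (x0,x0) (ear_arcs (Ear cyc s)) r).2) ->
  forall u, u \in s ->
    if cyc then f u = f (head x0 s)
    else f u = f (head x0 s) \/ f u = f (last x0 s).
Proof.
case: s => [//|x s'] _; set s := x :: s'.
move: (erefl (if cyc then rcons s x else s)).
move: {1}(if cyc then rcons s x else s) => w hw.
pose L := (size w).-1.
have hsz : size (ear_arcs (Ear cyc s)) = L.
  rewrite /ear_arcs /L /=; case: cyc hw => /= -> .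
    by rewrite rot1_cons size_zip size_rcons /= size_rcons minnn.
  by rewrite size_zip /=; lia.
have hnth : forall r, (r < size (ear_arcs (Ear cyc s)))%N -> nth (x0,x0) (ear_arcs (Ear cyc s)) r = (nth x0 w r, nth x0 w r.+1).
  move=> r hr; rewrite /ear_arcs /= in hr *; case: cyc hw hr hsz => /= -> hr _.
    rewrite rot1_cons nth_zip /=; last by rewrite size_rcons.
    rewrite rot1_cons size_zip size_rcons minnn in hr.
    congr (_, _); by rewrite -[x :: rcons s' x]/(rcons s x) nth_rcons hr.
  by rewrite nth_zip_cond ifT.
move=> H.
have good : forall r, (r < L)%N -> r != k -> f (nth x0 w r) = f (nth x0 w r.+1).
  by move=> r hr hk; have := H r; rewrite hnth ?hsz // => /(_ _ hk); apply; rewrite ?hsz.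
have key : forall r, (r <= L)%N -> (if (r <= k)%N then f (nth x0 w r) = f (nth x0 w 0)
                                     else f (nth x0 w r) = f (nth x0 w L)).
  move=> r hr; case: ifP => hrk.
    symmetry; apply: chain_eq => // q _ hq; apply: good; first by lia.
    by apply/eqP; lia.
  apply: chain_eq => // q hq hq2; apply: good => //; apply/eqP; lia.
clear hnth good; move=> u /(nthP x0) [r hr <-].
have hws : nth x0 w r = nth x0 s r.
  by rewrite hw; case: (cyc) => //; rewrite nth_rcons hr.
have hrL : (r <= L)%N by rewrite /L hw; move: hr; rewrite /s; case: (cyc); rewrite ?size_rcons /=; lia.
have := key r hrL; rewrite hws.
have h0 : nth x0 w 0 = x by rewrite hw; case: (cyc).
rewrite h0 /= /L; clear key hrL hws h0 hsz H L.
case: cyc hw => /= -> .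
  have -> : nth x0 (rcons s x) (size (rcons s x)).-1 = x.
    by rewrite size_rcons /= nth_rcons ltnn eqxx.
  by case: ifP.
rewrite nth_last /=; case: ifP; by [left | right].
Qed.

Definition lab m (D : seq (ear m)) (j i : 'I_m) : nat :=
  index (j, i) (ear_arcs (nth (ear0 m) D (find (fun E => (j, i) \in ear_arcs E) D))).

Lemma lab_arc m (N : rel 'I_m) (D : seq (ear m)) t j i :
  ear_decomposition N D -> (t < size D)%N ->
  (j, i) \in ear_arcs (nth (ear0 m) D t) ->
  lab D j i = index (j, i) (ear_arcs (nth (ear0 m) D t)).
Proof.
case=> _ _ Hdis _ _ ht ha.
set p := (fun E : ear m => (j, i) \in ear_arcs E).
have hf : (find p D <= t)%N.
  rewrite leqNgt; apply/negP => /(before_find (ear0 m)) /=.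
  by rewrite /p ha.
have hhas : has p D by apply/(has_nthP (ear0 m)); exists t.
have hp := nth_find (ear0 m) hhas.
move: hf; rewrite leq_eqVlt => /orP [/eqP he|hlt].
  by rewrite /lab -/p he.
by have := Hdis _ _ hlt ht _ hp; rewrite ha.
Qed.

Lemma prev_mem m (D : seq (ear m)) t u :
  u \in prev_vs D t -> exists2 t', (t' < t)%N /\ (t' < size D)%N & u \in ear_vs (nth (ear0 m) D t').
Proof.
rewrite /prev_vs; elim: D t => [|E D IH] [|t] //=.
rewrite mem_cat => /orP [h|/IH [t' [h1 h2] h3]].
  by exists 0%N.
by exists t'.+1.
Qed.

Lemma main_lemma m (N : rel 'I_m) (D : seq (ear m)) (U : Type) (f : 'I_m -> U) (k : nat) :
  ear_decomposition N D ->
  (forall j i, N j i -> lab D j i != k -> f j = f i) ->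
  forall u v, f u = f v.
Proof.
move=> HD Hf u v.
have HD' := HD; case: HD' => [[hsz0 hcyc0] hok Hdis [Hcov HN] Hatt].
pose x0 := u.
pose c := f (head x0 (ear_vs (nth (ear0 m) D 0))).
suff H : forall t, (t < size D)%N -> forall w, w \in ear_vs (nth (ear0 m) D t) -> f w = c.
  have [tu htu hu] := Hcov u; have [tv htv hv] := Hcov v.
  by rewrite (H _ htu _ hu) (H _ htv _ hv).
elim/ltn_ind => t IH ht.
set E := nth (ear0 m) D t.
have hokE : ear_ok E by apply: (all_nthP (ear0 m) hok).
move: hokE => /andP [huniq hs].
have good : forall r, (r < size (ear_arcs (Ear (ear_cyc E) (ear_vs E))))%N -> r != k ->
   f (nth (x0, x0) (ear_arcs (Ear (ear_cyc E) (ear_vs E))) r).1 =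
   f (nth (x0, x0) (ear_arcs (Ear (ear_cyc E) (ear_vs E))) r).2.
  have -> : Ear (ear_cyc E) (ear_vs E) = E by case: (E).
  move=> r hr hrk.
  have ha := mem_nth (x0, x0) hr.
  case hji : (nth (x0, x0) (ear_arcs E) r) ha => [j i] ha /=.
  apply: Hf; first by apply/HN; exists t.
  rewrite (lab_arc HD ht ha) -hji index_uniq //.
  by rewrite /ear_arcs; case: (ear_cyc E); apply: zip_uniql.
have HE := ear_lemma hs good.
have hattE := Hatt t.
case: (posnP t) => [t0|tpos].
  move: HE; rewrite /E t0 hcyc0 => HE w hw; exact: HE.
move: (hattE tpos ht); cbv zeta; rewrite -/E.
move: HE; case: (ear_cyc E) => HE.
  move=> [v0 hv0]; have [hv0E hv0p] : v0 \in ear_vs E /\ v0 \in prev_vs D t by apply/hv0.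
  have [t' [ht1 ht2] ht'] := prev_mem hv0p.
  move=> w hw; rewrite (HE _ hw) -(HE _ hv0E); exact: (IH t' ht1 ht2).
move=> hpath.
have hends : f (head x0 (ear_vs E)) = c /\ f (last x0 (ear_vs E)) = c.
  move: hs hpath; case: (ear_vs E) => [//|y s] _ hpath /=; split.
    have [_ hp] : y \in y :: s /\ y \in prev_vs D t by apply/hpath; left.
    have [t' [ht1 ht2] ht'] := prev_mem hp; exact: (IH t' ht1 ht2).
  have [_ hp] : last y s \in y :: s /\ last y s \in prev_vs D t.
    by apply/hpath; right.
  have [t' [ht1 ht2] ht'] := prev_mem hp; exact: (IH t' ht1 ht2).
move=> w hw; case: (HE _ hw) => ->; by case: hends.
Qed.

Local Open Scope ring_scope.

Theorem corollary4 (R : realType) (m n : nat) (N : rel 'I_m)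
  (D : seq (ear m)) :
  (2 <= m)%N ->
  (forall i : 'I_m, ~~ N i i) ->
  (forall i j : 'I_m, connect N i j) ->
  ear_decomposition N D ->
  all (fun E => (ear_len E <= n)%N) D ->
  exists (r : 'I_m -> 'I_m -> nat) (C : forall j i : 'I_m, 'M[R]_(r j i, n)),
    (forall j i : 'I_m, N j i ->
       exists2 v : 'cV[R]_n, v != 0 & C j i *m v = 0) /\
    well_configured N C.
Proof.
move=> _ _ _ HD Hlen.
pose d (j i : 'I_m) : 'rV[R]_n := \row_a ((nat_of_ord a != lab D j i)%:R).
exists (fun _ _ => n), (fun j i => diag_mx (d j i)); split.
  move=> j i hN.
  have HD' := HD; case: HD' => _ _ _ [_ HN] _.
  have [t ht ha] := (HN j i).1 hN.
  have hl : (lab D j i < n)%N.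
    rewrite (lab_arc HD ht ha); apply: (leq_trans _ (all_nthP (ear0 m) Hlen t ht)).
    by rewrite /ear_len index_mem.
  exists (\col_a ((nat_of_ord a == lab D j i)%:R)).
    apply/eqP => /matrixP /(_ (Ordinal hl) 0); rewrite !mxE eqxx /= => /eqP.
    by rewrite oner_eq0.
  apply/matrixP => a b; rewrite mul_diag_mx !mxE.
  by case: eqP => _; rewrite ?mulr0 ?mul0r.
move=> x Hx i j; apply/matrixP => a b; rewrite (ord1 b).
apply: (main_lemma (f := fun u => x u a 0) (k := nat_of_ord a) HD) => j' i' hN hl.
rewrite eq_sym in hl; have := Hx j' i' hN => /matrixP /(_ a 0); rewrite !mul_diag_mx !mxE hl mul1r.
by move=> ->; rewrite mul1r.
Qed.
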